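(* Let $n\ge1$, $q\in[0,1]$, and let $\mu_q$ be the probability distribution on $\{z\in\{0,1\}^{2n}:\mathrm{wt}(z)=n\}$ defined by $\mu_q(z)\propto q^{-2A(z)}$ if $0<q\le1$, and $\mu_0=\delta_{z,0^n1^n}$. Then for every $w\in\{1,\dots,2n\}$, $$\mu_q\Bigl(\#\{k\le w: z_k=1\}\;\le\;\#\{k\le w-1:z_k=0\}\Bigr)\;\ge\;\tfrac12 .$$ (Geometrically: in the state $\sum_z q^{-A(z)}|x,z\rangle_V$, the $w$-th particle is found in the left half of the grid with probability at least $1/2$.)
   Context: $A(z)=\sum_{j=1}^{2n}jz_j-\frac{n(n+1)}{2}$ for $z\in\{0,1\}^{2n}$ of Hamming weight $n$. A string $z$ is identified with the monotone lattice path in the rotated $n\times n$ grid from the top vertex $(0,0)$ to the bottom vertex $(n,n)$ whose $k$-th step goes from $(i,j)$ to $(i+1-z_k,j+z_k)$; $A(z)$ is the number of unit squares of the grid lying to the right of this path. The $w$-th step (edge) has horizontal coordinate $t=n+j-i+z_w$, where $(i,j)$ is its starting vertex, and lies in the left half of the grid iff $t\le n$, which is exactly the displayed event. *)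

(* Defs.v *)
From HB Require Import structures.
From mathcomp Require Import all_boot all_order all_algebra.
Set Implicit Arguments. Unset Strict Implicit. Unset Printing Implicit Defensive.
Import Order.TTheory GRing.Theory Num.Theory.

(* Binary strings z in {0,1}^{2n}; position j (1-based, as in the paper)
   is the ordinal i : 'I_(2*n) with j = i + 1. *)
Definition bstring (n : nat) := {ffun 'I_(2 * n) -> bool}.

Definition hweight n (z : bstring n) : nat := \sum_(i < 2 * n) (z i : nat).

Definition Aval n (z : bstring n) : nat :=
  (\sum_(i < 2 * n) i.+1 * (z i : nat)) - (n * n.+1) %/ 2.

Definition zmin n : bstring n := [ffun i : 'I_(2 * n) => n <= i].

(* mu_q(z): for 0 < q, proportional to q^{-2A(z)} on strings of weight n;
   for q = 0, the point mass at 0^n 1^n. (Only evaluated on weight-n z.) *)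
Definition mu (R : realFieldType) n (q : R) (z : bstring n) : R :=
  (if q == 0 then (z == zmin n)%:R
  else q ^- (2 * Aval z)%N /
       \sum_(y : bstring n | hweight y == n) q ^- (2 * Aval y)%N)%R.

(* #{k <= w : z_k = 1} (1-based k), i.e. 0-based indices i < w *)
Definition ones_upto n (z : bstring n) (w : nat) : nat :=
  #|[set i : 'I_(2 * n) | (i < w) && z i]|.
(* #{k <= w-1 : z_k = 0} (1-based k), i.e. 0-based indices i < w - 1 *)
Definition zeros_upto n (z : bstring n) (w : nat) : nat :=
  #|[set i : 'I_(2 * n) | (i < w.-1) && ~~ z i]|.

Definition left_prob (R : realFieldType) n (q : R) (w : nat) : R :=
  (\sum_(z : bstring n | (hweight z == n) && (ones_upto z w <= zeros_upto z w)%N)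
     mu q z)%R.

(* Main.v *)
Require Import Defs.
From HB Require Import structures.
From mathcomp Require Import all_boot all_order all_algebra.
From mathcomp Require Import zify ring lra.
Import Order.TTheory GRing.Theory Num.Theory.
Set Implicit Arguments. Unset Strict Implicit.

Section C.
Variable w : nat.

Definition J (g : nat -> bool) m : nat := \sum_(i < m) (g i : nat).
Definition H (g : nat -> bool) m : int := (Posz m - Posz (J g m) * 2)%R.

Lemma J_S g m : J g m.+1 = J g m + g m.
Proof. by rewrite /J big_ord_recr. Qed.

Lemma H0 g : H g 0 = 0%R.
Proof. by rewrite /H /J big_ord0. Qed.

Lemma H_S g m : H g m.+1 = (H g m + (if g m then -1 else 1))%R.
Proof. rewrite /H J_S; case: (g m) => /=; lia. Qed.

Fixpoint lastzero g M := match M with 0 => 0 | k.+1 => if H g k.+1 == 0%R then k.+1 else lastzero g k end.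

Lemma lastzero_le g M : lastzero g M <= M.
Proof. elim: M => //= k IH; case: ifP => // _; lia. Qed.

Lemma lastzero_H g M : H g (lastzero g M) = 0%R.
Proof. elim: M => [|k IH] /=; first exact: H0. by case: ifP => // /eqP. Qed.

Lemma lastzero_nz g M k : lastzero g M < k <= M -> H g k != 0%R.
Proof.
elim: M => [|M IH] /=; first lia.
case: ifP => [_|/negbT hz]; first lia.
move=> hk; have [->//|ne] := eqVneq k M.+1. apply: IH; move: hk ne; lia.
Qed.

Definition a g := lastzero g w.-1.

Fixpoint nz g m := match m with 0 => true | k.+1 => nz g k && ((k < w) || (H g k != 0%R)) end.
Definition P g m := (a g <= m) && nz g m.
Definition flip g i := (a g <= i) && nz g i.+1.

Section Flip.
Variables (N : nat) (g g' : nat -> bool).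
Hypothesis hg' : forall i, i < N -> g' i = g i (+) flip g i.

Lemma Hflip m : m <= N -> H g' m = if P g m then (- H g m)%R else H g m.
Proof.
elim: m => [|m IH] hm; first by rewrite !H0; case: ifP.
rewrite !H_S IH; last lia.
rewrite hg'; last lia.
rewrite /flip /P /=.
have hz := lastzero_H g w.-1. rewrite -/(a g) in hz.
case ha: (a g <= m); case ha1: (a g <= m.+1); case hn: (nz g m) => /=; try lia;
  try (have e : a g = m.+1 by lia); try (rewrite e H_S in hz);
  case: (g m) hz => /=;
  case: (m < w) => /=; case: (eqVneq (H g m) 0%R) => [->|] /=; lia.
Qed.

Lemma Hz_eq m : m <= N -> (H g' m == 0%R) = (H g m == 0%R).
Proof. move=> hm; rewrite Hflip //; case: ifP => // _; by rewrite oppr_eq0. Qed.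

Lemma lastzero_eq M : M <= N -> lastzero g' M = lastzero g M.
Proof. elim: M => //= M IH hM; rewrite Hz_eq // IH //; lia. Qed.

Lemma nz_eq m : m <= N -> nz g' m = nz g m.
Proof. elim: m => //= m IH hm; rewrite IH; last lia. by rewrite Hz_eq //; lia. Qed.

Hypothesis hwN : w.-1 <= N.

Lemma a_eq : a g' = a g.
Proof. exact: lastzero_eq. Qed.

Lemma flip_eq i : i < N -> flip g' i = flip g i.
Proof. move=> hi; by rewrite /flip a_eq nz_eq. Qed.

Lemma P_eq m : m <= N -> P g' m = P g m.
Proof. move=> hm; by rewrite /P a_eq nz_eq. Qed.

Lemma invol i : i < N -> g' i (+) flip g' i = g i.
Proof. move=> hi; rewrite flip_eq // hg' //; by case: (g i); case: (flip g i). Qed.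
End Flip.

Lemma J_le g m : J g m <= m.
Proof. elim: m => [|m IH]; first by rewrite /J big_ord0. rewrite J_S; case: (g m) => /=; lia. Qed.

Lemma Sid (g : nat -> bool) M : \sum_(i < M) i.+1 * g i + \sum_(m < M) J g m = M * J g M.
Proof.
elim: M => [|M IH]; first by rewrite !big_ord0.
rewrite !big_ord_recr /= J_S. move: IH. set A := \sum_(i < M) _. set B := \sum_(i < M) _. clearbody A B; case: (g M) => /=; nia.
Qed.

Lemma event g : 1 <= w ->
  (J g w <= w.-1 - J g w.-1) = (0 <= H g w.-1)%R && (0 <= H g w)%R.
Proof.
case: w => // v _ /=. rewrite H_S J_S /H. case: (g v) => /=.
- apply/idP/idP; lia.
- apply/idP/idP; lia.
Qed.

Lemma nz_w g m : m <= w -> nz g m.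
Proof. elim: m => //= m IH hm; rewrite IH; last lia. by have -> : m < w by lia. Qed.

Lemma sign g : 1 <= w -> (H g w.-1 <= 0)%R -> (H g w <= 0)%R ->
  forall m, P g m -> (H g m <= 0)%R.
Proof.
move=> hw h1 h2 m /andP [ham hnz].
case: (leqP w m) => hwm.
- have : forall d, nz g (w + d) -> (H g (w + d) <= 0)%R.
    elim=> [|d IH]; first by rewrite addn0.
    rewrite addnS /= => /andP [hn /orP [hlt|hne]]; first lia.
    have := IH hn. rewrite H_S. move: hne; case: (g (w+d)) => /=; lia.
  move=> /(_ (m - w)); rewrite subnKC //; exact.
- have : forall d m', m' + d = w.-1 -> a g <= m' -> (H g m' <= 0)%R.
    elim=> [|d IH] m' hmd ha'; first by rewrite addn0 in hmd; rewrite hmd.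
    have hm1 := IH m'.+1 ltac:(lia) ltac:(lia).
    have hnz1 : H g m'.+1 != 0%R. { have := lastzero_nz (g:=g) (M:=w.-1) (k:=m'.+1). rewrite -/(a g). apply. apply/andP; split; lia. }
    move: hm1 hnz1; rewrite H_S; case: (g m') => /=; lia.
  move=> /(_ (w.-1 - m) m); apply; lia.
Qed.
End C.
Section B.
Variables (n w : nat).
Hypothesis hw1 : 1 <= w.
Hypothesis hw2 : w <= 2 * n.

Definition gz (z : bstring n) (i : nat) : bool :=
  odflt false (omap z (insub i : option 'I_(2 * n))).

Lemma gz_val z (j : 'I_(2 * n)) : gz z j = z j.
Proof. by rewrite /gz valK. Qed.

Lemma gz_lt z i (hi : i < 2 * n) : gz z i = z (Ordinal hi).
Proof. by rewrite /gz insubT. Qed.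

Definition Phi (z : bstring n) : bstring n :=
  [ffun i : 'I_(2 * n) => z i (+) flip w (gz z) i].

Lemma gz_Phi z i : i < 2 * n -> gz (Phi z) i = gz z i (+) flip w (gz z) i.
Proof. move=> hi; by rewrite !gz_lt ffunE. Qed.

Lemma Phi_invol z : Phi (Phi z) = z.
Proof.
apply/ffunP => i; rewrite !ffunE.
rewrite (flip_eq (N := 2 * n) (g := gz z) (g' := gz (Phi z))) //.
- by case: (z i); case: (flip w (gz z) i).
- exact: gz_Phi.
- lia.
Qed.

Lemma hweightE z : hweight z = J (gz z) (2 * n).
Proof. rewrite /hweight /J; apply: eq_bigr => i _; by rewrite gz_val. Qed.

Lemma SE (z : bstring n) : \sum_(i < 2 * n) i.+1 * (z i : nat) = \sum_(i < 2 * n) i.+1 * (gz z i : nat).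
Proof. apply: eq_bigr => i _; by rewrite gz_val. Qed.

Lemma cardE (f : bool -> bool) (z : bstring n) m : m <= 2 * n ->
  #|[set i : 'I_(2 * n) | (i < m) && f (z i)]| = \sum_(i < m) (f (gz z i) : nat).
Proof.
move=> hm; rewrite -sum1_card (big_ord_widen (2 * n) (fun i => (f (gz z i) : nat)) hm).
rewrite big_mkcond [RHS]big_mkcond /=; apply: eq_bigr => i _.
rewrite in_set gz_val; by case: (i < m); case: (f (z i)).
Qed.

Lemma sum_neg (g : nat -> bool) m : \sum_(i < m) (~~ g i : nat) = m - J g m.
Proof.
elim: m => [|m IH]; first by rewrite big_ord0.
rewrite big_ord_recr /= IH J_S. have := J_le g m. case: (g m) => /=; lia.
Qed.

Lemma leftE z : (ones_upto z w <= zeros_upto z w) =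
   (0 <= H (gz z) w.-1)%R && (0 <= H (gz z) w)%R.
Proof.
rewrite /ones_upto /zeros_upto (cardE id) // (cardE negb); last lia.
rewrite sum_neg -(event _ hw1). done.
Qed.


Let hg' z : forall i, i < 2 * n -> gz (Phi z) i = gz z i (+) flip w (gz z) i.
Proof. exact: gz_Phi. Qed.

Lemma weight_Phi z : hweight z == n -> hweight (Phi z) == n.
Proof.
rewrite !hweightE => /eqP hJ.
have := Hflip (hg' z) (leqnn (2 * n)).
have : H (gz z) (2 * n) = 0%R by rewrite /H hJ; lia.
move=> ->; rewrite oppr0; case: ifP => _; rewrite /H; lia.
Qed.

Lemma Pw z m : m <= w -> w.-1 <= m -> P w (gz z) m.
Proof.
move=> h1 h2; rewrite /P nz_w // andbT.
have := lastzero_le (gz z) w.-1; rewrite /a; lia.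
Qed.

Lemma left_Phi z : ~~ (ones_upto z w <= zeros_upto z w) ->
  (ones_upto (Phi z) w <= zeros_upto (Phi z) w).
Proof.
rewrite !leftE.
rewrite (Hflip (hg' z) (m := w.-1)); last lia.
rewrite (Hflip (hg' z) (m := w)) //.
rewrite !Pw //; try lia.
have := H_S (gz z) w.-1. rewrite prednK //.
case: (gz z w.-1) => /= ->; rewrite negb_and; case/orP; lia.
Qed.

Lemma right_le z : ~~ (ones_upto z w <= zeros_upto z w) ->
  (H (gz z) w.-1 <= 0)%R /\ (H (gz z) w <= 0)%R.
Proof.
rewrite !leftE.
have := H_S (gz z) w.-1. rewrite prednK //.
case: (gz z w.-1) => /= ->; rewrite negb_and; case/orP; lia.
Qed.

Lemma A_mono z : hweight z == n -> ~~ (ones_upto z w <= zeros_upto z w) ->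
  Aval z <= Aval (Phi z).
Proof.
move=> hW hR; have hW' := weight_Phi hW.
rewrite !hweightE in hW hW'.
rewrite /Aval leq_sub2r // !SE.
have e1 := Sid (gz z) (2 * n). have e2 := Sid (gz (Phi z)) (2 * n).
have hle : \sum_(m < 2 * n) J (gz (Phi z)) m <= \sum_(m < 2 * n) J (gz z) m.
  apply: leq_sum => m _.
  have := Hflip (hg' z) (m := m) (ltnW (ltn_ord m)).
  case: ifP => hP; last by rewrite /H; lia.
  have [r1 r2] := right_le hR.
  have := sign hw1 r1 r2 hP. rewrite /H; lia.
move: e1 e2 hle; rewrite (eqP hW) (eqP hW'); lia.
Qed.

Lemma gz_zmin i : i < 2 * n -> gz (zmin n) i = (n <= i).
Proof. move=> hi; by rewrite gz_lt ffunE. Qed.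

Lemma J_zmin m : m <= 2 * n -> J (gz (zmin n)) m = m - n.
Proof.
elim: m => [|m IH] hm; first by rewrite /J big_ord0.
rewrite J_S IH; last lia. rewrite gz_zmin; last lia.
case: (leqP n m) => /=; lia.
Qed.

Lemma zmin_weight : hweight (zmin n) == n.
Proof. rewrite hweightE J_zmin //; apply/eqP; lia. Qed.

Lemma zmin_left : 1 <= n -> ones_upto (zmin n) w <= zeros_upto (zmin n) w.
Proof.
move=> hn.
rewrite /ones_upto /zeros_upto (cardE id) // (cardE negb); last lia.
rewrite sum_neg. rewrite -/(J _ w) !J_zmin; lia.
Qed.
End B.
Unset Implicit Arguments.
Local Open Scope ring_scope.
Lemma powV_mono (R : realFieldType) (q : R) (k1 k2 : nat) :
  0 < q -> q <= 1 -> (k1 <= k2)%N -> q ^- k1 <= q ^- k2.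
Proof.
move=> hq0 hq1 hk.
rewrite lef_pV2 ?posrE ?exprn_gt0 //.
rewrite -(subnKC hk) exprD.
have h1 : q ^+ (k2 - k1) <= 1 by apply: exprn_ile1 => //; exact: ltW.
have h0 : 0 <= q ^+ k1 by apply: exprn_ge0; exact: ltW.
by rewrite -{2}(mulr1 (q ^+ k1)) ler_wpM2l.
Qed.

Theorem mainTheorem6 (R : realFieldType) (n : nat) (q : R) (w : nat) :
  (1 <= n)%N -> 0 <= q -> q <= 1 -> (1 <= w <= 2 * n)%N ->
  2^-1 <= @left_prob R n q w.
Proof.
move=> hn hq0 hq1 /andP [hw1 hw2].
pose Phi := @Phi n w.
have Pinj : injective Phi := can_inj (Phi_invol hw1 hw2).
have mu_ge0 : forall z : bstring n, 0 <= mu q z.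
  move=> z; rewrite /mu; case: (q == 0); first by case: (z == zmin n).
  apply: divr_ge0; first by rewrite invr_ge0 exprn_ge0.
  apply: sumr_ge0 => y _; by rewrite invr_ge0 exprn_ge0.
have zW := zmin_weight hw1 hw2.
have zL := zmin_left hw1 hw2 hn.
have tot : \sum_(z : bstring n | hweight z == n) mu q z = 1.
  rewrite /mu; have [q0|hq] := eqVneq q 0.
  - rewrite (bigD1 (zmin n)) //= eqxx big1 ?addr0 // => z /andP [_ /negbTE ->] //.
  - have qp : 0 < q by rewrite lt_def hq.
    rewrite -mulr_suml mulfV //.
    rewrite (bigD1 (zmin n)) //=; apply: lt0r_neq0.
    apply: ltr_pwDl; first by rewrite invr_gt0 exprn_gt0.
    apply: sumr_ge0 => y _; by rewrite invr_ge0 exprn_ge0.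
have mono : forall z : bstring n, hweight z == n -> ~~ (ones_upto z w <= zeros_upto z w)%N ->
    mu q z <= mu q (Phi z).
  move=> z hW hR; rewrite /mu; have [q0|hq] := eqVneq q 0.
  - have -> : (z == zmin n) = false.
      apply/negbTE; apply: contraNneq hR => ->; exact: zL.
    by case: (Phi z == zmin n).
  - have qp : 0 < q by rewrite lt_def hq.
    apply: ler_wpM2r.
      by rewrite invr_ge0; apply: sumr_ge0 => y _; rewrite invr_ge0 exprn_ge0.
    apply: powV_mono => //; rewrite leq_mul2l /=.
    exact: (A_mono hw1 hw2).
rewrite /left_prob.
move: tot; rewrite (bigID (fun z => (ones_upto z w <= zeros_upto z w)%N)) /=.
set Ls := \sum_(i | _ && _) _.
set Rs := \sum_(i | _ && ~~ _) _.
move=> tot.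
have hRL : Rs <= Ls.
  apply: (le_trans (y := \sum_(z | (hweight z == n) && ~~ (ones_upto z w <= zeros_upto z w)%N) mu q (Phi z))).
    apply: ler_sum => z /andP [hW hR]; exact: mono.
  rewrite (reindex_inj Pinj) /=.
  rewrite [X in X <= _]big_mkcond [X in _ <= X]big_mkcond /=.
  apply: ler_sum => z _.
  rewrite /Phi Phi_invol //.
  case: ifP => [/andP [hW hR]|_]; last by case: ifP.
  rewrite -(Phi_invol hw1 hw2 z) (weight_Phi hw1 hw2) // (left_Phi hw1 hw2) //.
rewrite -/Ls in tot *. lra.
Qed.
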